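(* Let $S$ be a Stone relation algebra that is atomic, atom-rectangular and simple, and has finitely many atoms. Then $S$ is a relation algebra, that is, $\overline{\overline{x}}=x$ for all $x\in S$.
   Context: A Stone relation algebra is a structure $(S,\sqcup,\sqcap,\cdot,\overline{\,\cdot\,},{}^{\smile},\bot,\top,1)$ (write $xy$ for $x\cdot y$, $\overline{x}$ for the pseudocomplement, $x^{\smile}$ for the converse) such that: $(S,\sqcup,\sqcap,\bot,\top)$ is a bounded distributive lattice with order $x\sqsubseteq y\iff x\sqcup y=y$; $x\sqcap y=\bot\iff x\sqsubseteq\overline{y}$; $\overline{x}\sqcup\overline{\overline{x}}=\top$; $\cdot$ is associative with two-sided unit $1$, distributes over $\sqcup$ on both sides, and $\bot$ is a zero of $\cdot$; $x^{\smile\smile}=x$, $(xy)^{\smile}=y^{\smile}x^{\smile}$, $(x\sqcup y)^{\smile}=x^{\smile}\sqcup y^{\smile}$; $\overline{\overline{1}}=1$; $\overline{\overline{xy}}=\overline{\overline{x}}\,\overline{\overline{y}}$; $xy\sqcap z\sqsubseteq x(y\sqcap x^{\smile}z)$. A relation algebra is a Stone relation algebra with $\overline{\overline{x}}=x$ for all $x$. An atom is an element $x\neq\bot$ such that $\bot\neq y\sqsubseteq x$ implies $y=x$. An element $x$ is a rectangle if $x\top x\sqsubseteq x$ and simple if $\top x\top=\top$. $S$ is simple if every element other than $\bot$ is simple; atomic if every $x\neq\bot$ has an atom below it; atom-rectangular if every atom is a rectangle. *)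

(* Defs.v *)
From Stdlib Require Import List.

Record StoneRA := {
  car :> Type;
  sup : car -> car -> car;
  inf : car -> car -> car;
  comp : car -> car -> car;
  pc : car -> car;
  conv : car -> car;
  bot : car;
  top : car;
  one : car;
  sup_assoc : forall x y z, sup x (sup y z) = sup (sup x y) z;
  sup_comm : forall x y, sup x y = sup y x;
  sup_idem : forall x, sup x x = x;
  inf_assoc : forall x y z, inf x (inf y z) = inf (inf x y) z;
  inf_comm : forall x y, inf x y = inf y x;
  inf_idem : forall x, inf x x = x;
  sup_absorb : forall x y, sup x (inf x y) = x;
  inf_absorb : forall x y, inf x (sup x y) = x;
  inf_sup_distr : forall x y z, inf x (sup y z) = sup (inf x y) (inf x z);
  sup_bot : forall x, sup x bot = x;
  inf_top : forall x, inf x top = x;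
  (* pseudocomplement; order x ⊑ y := x ⊔ y = y *)
  pc_spec : forall x y, inf x y = bot <-> sup x (pc y) = pc y;
  stone : forall x, sup (pc x) (pc (pc x)) = top;
  comp_assoc : forall x y z, comp x (comp y z) = comp (comp x y) z;
  comp_one_l : forall x, comp one x = x;
  comp_one_r : forall x, comp x one = x;
  comp_sup_l : forall x y z, comp (sup x y) z = sup (comp x z) (comp y z);
  comp_sup_r : forall x y z, comp x (sup y z) = sup (comp x y) (comp x z);
  comp_bot_l : forall x, comp bot x = bot;
  comp_bot_r : forall x, comp x bot = bot;
  conv_invol : forall x, conv (conv x) = x;
  conv_comp : forall x y, conv (comp x y) = comp (conv y) (conv x);
  conv_sup : forall x y, conv (sup x y) = sup (conv x) (conv y);
  pp_one : pc (pc one) = one;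
  pp_comp : forall x y, pc (pc (comp x y)) = comp (pc (pc x)) (pc (pc y));
  dedekind : forall x y z,
    sup (inf (comp x y) z) (comp x (inf y (comp (conv x) z)))
    = comp x (inf y (comp (conv x) z))
}.

Section Defs.
Variable S : StoneRA.

Definition le (x y : S) : Prop := sup S x y = y.

Definition atom (x : S) : Prop :=
  x <> bot S /\ forall y : S, y <> bot S -> le y x -> y = x.

Definition rectangle (x : S) : Prop :=
  le (comp S (comp S x (top S)) x) x.

Definition simple_elt (x : S) : Prop :=
  comp S (comp S (top S) x) (top S) = top S.

Definition simple_alg : Prop := forall x : S, x <> bot S -> simple_elt x.

Definition atomic : Prop :=
  forall x : S, x <> bot S -> exists a, atom a /\ le a x.

Definition atom_rectangular : Prop := forall a : S, atom a -> rectangle a.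

Definition finitely_many_atoms : Prop :=
  exists l : list S, forall a : S, atom a -> In a l.

End Defs.

(* Main.v *)
Require Import Defs.
From Stdlib Require Import List.
From Stdlib Require Import Classical.

Local Notation "x ⊑ y" := (le _ x y) (at level 70).
Local Notation "x ⊔ y" := (sup _ x y) (at level 50, left associativity).
Local Notation "x ⊓ y" := (inf _ x y) (at level 40, left associativity).
Local Notation "x ⋅ y" := (comp _ x y) (at level 31, left associativity).

Section L.
Lemma le_refl {S : StoneRA} (x : S) : x ⊑ x.
Proof. apply sup_idem. Qed.

Lemma le_trans {S : StoneRA} (x y z : S) : x ⊑ y -> y ⊑ z -> x ⊑ z.
Proof. unfold le; intros H1 H2. rewrite <- H2, sup_assoc, H1. reflexivity. Qed.

Lemma le_antisym {S : StoneRA} (x y : S) : x ⊑ y -> y ⊑ x -> x = y.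
Proof. unfold le; intros H1 H2. rewrite <- H2, sup_comm. exact H1. Qed.

Lemma sup_ub1 {S : StoneRA} (x y : S) : x ⊑ x ⊔ y.
Proof. unfold le. rewrite sup_assoc, sup_idem. reflexivity. Qed.

Lemma sup_ub2 {S : StoneRA} (x y : S) : y ⊑ x ⊔ y.
Proof. rewrite sup_comm. apply sup_ub1. Qed.

Lemma sup_lub {S : StoneRA} (x y z : S) : x ⊑ z -> y ⊑ z -> x ⊔ y ⊑ z.
Proof. unfold le; intros H1 H2. rewrite <- sup_assoc, H2, H1. reflexivity. Qed.

Lemma le_inf {S : StoneRA} (x y : S) : x ⊑ y <-> x ⊓ y = x.
Proof.
  unfold le; split; intro H.
  - rewrite <- H. apply inf_absorb.
  - rewrite <- H, sup_comm, inf_comm. apply sup_absorb.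
Qed.

Lemma inf_lb1 {S : StoneRA} (x y : S) : x ⊓ y ⊑ x.
Proof. apply le_inf. rewrite (inf_comm _ (x ⊓ y)), inf_assoc, inf_idem. reflexivity. Qed.

Lemma inf_lb2 {S : StoneRA} (x y : S) : x ⊓ y ⊑ y.
Proof. rewrite inf_comm. apply inf_lb1. Qed.

Lemma inf_glb {S : StoneRA} (x y z : S) : z ⊑ x -> z ⊑ y -> z ⊑ x ⊓ y.
Proof. rewrite !le_inf; intros H1 H2. rewrite inf_assoc, H1, H2. reflexivity. Qed.

Lemma bot_le {S : StoneRA} (x : S) : bot S ⊑ x.
Proof. unfold le. rewrite sup_comm. apply sup_bot. Qed.

Lemma le_top {S : StoneRA} (x : S) : x ⊑ top S.
Proof. apply le_inf. apply inf_top. Qed.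

Lemma le_bot {S : StoneRA} (x : S) : x ⊑ bot S -> x = bot S.
Proof. intro H. apply le_antisym; auto using bot_le. Qed.

Lemma inf_mono {S : StoneRA} (x y x' y' : S) : x ⊑ x' -> y ⊑ y' -> x ⊓ y ⊑ x' ⊓ y'.
Proof.
  intros. apply inf_glb.
  - eapply le_trans; [apply inf_lb1|]; auto.
  - eapply le_trans; [apply inf_lb2|]; auto.
Qed.

Lemma pc_le {S : StoneRA} (x y : S) : x ⊓ y = bot S -> x ⊑ pc S y.
Proof. intro H. apply pc_spec. exact H. Qed.

Lemma pc_inf {S : StoneRA} (x : S) : x ⊓ pc S x = bot S.
Proof.
  rewrite inf_comm. apply (proj2 (pc_spec S (pc S x) x)). apply le_refl.
Qed.

Lemma pc_anti {S : StoneRA} (x y : S) : x ⊑ y -> pc S y ⊑ pc S x.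
Proof.
  intro H. apply pc_le. apply le_bot.
  apply le_trans with (pc S y ⊓ y).
  - apply inf_mono; auto using le_refl.
  - rewrite inf_comm, pc_inf. apply le_refl.
Qed.

Lemma pp_ge {S : StoneRA} (x : S) : x ⊑ pc S (pc S x).
Proof. apply pc_le. apply pc_inf. Qed.

Lemma pp_mono {S : StoneRA} (x y : S) : x ⊑ y -> pc S (pc S x) ⊑ pc S (pc S y).
Proof. intro; do 2 apply pc_anti; auto. Qed.

Lemma ppp {S : StoneRA} (x : S) : pc S (pc S (pc S x)) = pc S x.
Proof.
  apply le_antisym.
  - apply pc_anti. apply pp_ge.
  - apply pp_ge.
Qed.

Lemma pp_top {S : StoneRA} : pc S (pc S (top S)) = top S.
Proof. apply le_antisym. apply le_top. apply pp_ge. Qed.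

Lemma comp_mono_l {S : StoneRA} (x y z : S) : x ⊑ y -> x ⋅ z ⊑ y ⋅ z.
Proof. unfold le; intro H. rewrite <- comp_sup_l, H. reflexivity. Qed.

Lemma comp_mono_r {S : StoneRA} (x y z : S) : x ⊑ y -> z ⋅ x ⊑ z ⋅ y.
Proof. unfold le; intro H. rewrite <- comp_sup_r, H. reflexivity. Qed.

Lemma conv_mono {S : StoneRA} (x y : S) : x ⊑ y -> conv S x ⊑ conv S y.
Proof. unfold le; intro H. rewrite <- conv_sup, H. reflexivity. Qed.

Lemma ded_l {S : StoneRA} (x y z : S) : x ⋅ y ⊓ z ⊑ x ⋅ (y ⊓ conv S x ⋅ z).
Proof. unfold le. apply dedekind. Qed.

Lemma ded_r {S : StoneRA} (x y z : S) : x ⋅ y ⊓ z ⊑ (x ⊓ z ⋅ conv S y) ⋅ y.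
Proof.
  set (w := x ⋅ y ⊓ z).
  assert (H : conv S w ⊑ conv S y ⋅ (conv S x ⊓ y ⋅ conv S z)).
  { apply le_trans with (conv S y ⋅ conv S x ⊓ conv S z).
    - rewrite <- conv_comp. apply inf_glb; apply conv_mono; unfold w;
        auto using inf_lb1, inf_lb2.
    - pose proof (ded_l (conv S y) (conv S x) (conv S z)) as D.
      rewrite conv_invol in D. exact D. }
  apply conv_mono in H. rewrite conv_invol, conv_comp, conv_invol in H.
  eapply le_trans; [exact H|]. apply comp_mono_l.
  apply le_trans with (conv S (conv S x) ⊓ conv S (y ⋅ conv S z)).
  - apply inf_glb; apply conv_mono; auto using inf_lb1, inf_lb2.
  - rewrite conv_invol, conv_comp, conv_invol. apply le_refl.
Qed.

Lemma atom_le {S : StoneRA} (a y : S) : atom S a -> y <> bot S -> y ⊑ a -> y = a.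
Proof. intros [_ H] H1 H2. apply H; auto. Qed.

Lemma inf_bot {S : StoneRA} (x : S) : x ⊓ bot S = bot S.
Proof. apply le_bot. apply inf_lb2. Qed.

Lemma atom_regular (S : StoneRA) :
  atomic S -> atom_rectangular S -> simple_alg S ->
  forall a : S, atom S a -> pc S (pc S a) = a.
Proof.
  intros Hat Hrect Hsimp a Ha.
  assert (Hna : a <> bot S) by (destruct Ha; auto).
  assert (Hx : a ⋅ conv S a ⊓ one S <> bot S).
  { intro E. apply Hna. apply le_bot.
    apply le_trans with (one S ⋅ a ⊓ a).
    - rewrite comp_one_l, inf_idem. apply le_refl.
    - eapply le_trans; [apply ded_r|]. rewrite inf_comm, E, comp_bot_l. apply le_refl. }
  destruct (Hat _ Hx) as [b [Hb Hbx]].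
  assert (Hba : b ⋅ a <> bot S).
  { intro E. destruct Hb as [Hb _]. apply Hb. apply le_bot.
    apply le_trans with (a ⋅ conv S a ⊓ b).
    - apply inf_glb; [eapply le_trans; [exact Hbx| apply inf_lb1] | apply le_refl].
    - eapply le_trans; [apply ded_r|]. rewrite conv_invol, E, inf_bot, comp_bot_l.
      apply le_refl. }
  assert (Hy : conv S a ⋅ a ⊓ one S <> bot S).
  { intro E. apply Hna. apply le_bot.
    apply le_trans with (a ⋅ one S ⊓ a).
    - rewrite comp_one_r, inf_idem. apply le_refl.
    - eapply le_trans; [apply ded_l|]. rewrite inf_comm, E, comp_bot_r. apply le_refl. }
  destruct (Hat _ Hy) as [c [Hc Hcy]].
  assert (Hac : a ⋅ c <> bot S).
  { intro E. destruct Hc as [Hc _]. apply Hc. apply le_bot.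
    apply le_trans with (conv S a ⋅ a ⊓ c).
    - apply inf_glb; [eapply le_trans; [exact Hcy| apply inf_lb1] | apply le_refl].
    - eapply le_trans; [apply ded_l|]. rewrite conv_invol, E, inf_bot, comp_bot_r.
      apply le_refl. }
  set (p := pc S (pc S b)). set (q := pc S (pc S c)).
  assert (Hp1 : p ⊑ one S).
  { unfold p. rewrite <- (pp_one S). apply pp_mono.
    eapply le_trans; [exact Hbx| apply inf_lb2]. }
  assert (Hq1 : q ⊑ one S).
  { unfold q. rewrite <- (pp_one S). apply pp_mono.
    eapply le_trans; [exact Hcy| apply inf_lb2]. }
  assert (Hpa : p ⋅ a = a).
  { apply atom_le; auto.
    - intro E. apply Hba. apply le_bot. rewrite <- E. apply comp_mono_l. apply pp_ge.
    - rewrite <- (comp_one_l S a) at 2. apply comp_mono_l. exact Hp1. }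
  assert (Haq : a ⋅ q = a).
  { apply atom_le; auto.
    - intro E. apply Hac. apply le_bot. rewrite <- E. apply comp_mono_r. apply pp_ge.
    - rewrite <- (comp_one_r S a) at 2. apply comp_mono_r. exact Hq1. }
  assert (Hpp : p ⋅ top S ⋅ p ⊑ p).
  { unfold p. rewrite <- pp_top at 1. rewrite <- !pp_comp. apply pp_mono.
    apply Hrect. exact Hb. }
  assert (Hqq : q ⋅ top S ⋅ q ⊑ q).
  { unfold q. rewrite <- pp_top at 1. rewrite <- !pp_comp. apply pp_mono.
    apply Hrect. exact Hc. }
  assert (Hpta : p ⋅ top S ⋅ a ⊑ a).
  { rewrite <- Hpa at 1. rewrite comp_assoc. rewrite <- Hpa at 2.
    apply comp_mono_l. exact Hpp. }
  assert (Hatq : a ⋅ top S ⋅ q ⊑ a).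
  { rewrite <- Haq at 1. rewrite <- !comp_assoc. rewrite <- Haq at 2.
    apply comp_mono_r. rewrite comp_assoc. exact Hqq. }
  assert (Hr : pc S (pc S a) = p ⋅ pc S (pc S a) ⋅ q).
  { rewrite <- Hpa at 1. rewrite <- Haq at 1. rewrite comp_assoc, !pp_comp.
    unfold p, q. rewrite !ppp. reflexivity. }
  apply le_antisym; [|apply pp_ge].
  rewrite Hr.
  apply le_trans with (p ⋅ top S ⋅ q).
  - apply comp_mono_l, comp_mono_r, le_top.
  - assert (E : p ⋅ top S ⋅ q = p ⋅ top S ⋅ a ⋅ top S ⋅ q).
    { rewrite <- (Hsimp a Hna) at 1. rewrite !comp_assoc. reflexivity. }
    rewrite E. eapply le_trans; [|exact Hatq].
    apply comp_mono_l, comp_mono_l. exact Hpta.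
Qed.

Lemma cover (S : StoneRA) :
  atomic S -> (forall a : S, atom S a -> pc S (pc S a) = a) ->
  forall (l : list S) (z w : S),
    (forall b, atom S b -> b ⊑ z -> In b l /\ b ⊑ w) -> z ⊑ w.
Proof.
  intros Hat Hreg l. induction l as [|a l IH]; intros z w H.
  - destruct (classic (z = bot S)) as [E|E].
    + rewrite E. apply bot_le.
    + destruct (Hat z E) as [b [Hb Hbz]]. destruct (H b Hb Hbz) as [[] _].
  - destruct (classic (atom S a)) as [Ha|Ha].
    + assert (T : pc S a ⊔ a = top S).
      { rewrite <- (Hreg a Ha) at 2. apply stone. }
      assert (Z : z = z ⊓ a ⊔ z ⊓ pc S a).
      { rewrite <- inf_sup_distr, sup_comm, T, inf_top. reflexivity. }
      rewrite Z. apply sup_lub.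
      * destruct (classic (z ⊓ a = bot S)) as [E|E].
        -- rewrite E. apply bot_le.
        -- assert (E2 : z ⊓ a = a) by (apply atom_le; auto using inf_lb2).
           assert (Haz : a ⊑ z) by (rewrite <- E2; apply inf_lb1).
           destruct (H a Ha Haz) as [_ Hw]. rewrite E2. exact Hw.
      * apply IH. intros b Hb Hbz.
        assert (Hbz' : b ⊑ z) by (eapply le_trans; [exact Hbz| apply inf_lb1]).
        destruct (H b Hb Hbz') as [[E|Hin] Hw]; [|auto].
        subst a. exfalso. destruct Hb as [Hb _]. apply Hb. apply le_bot.
        rewrite <- (pc_inf b). apply inf_glb; [apply le_refl|].
        eapply le_trans; [exact Hbz| apply inf_lb2].
    + apply IH. intros b Hb Hbz. destruct (H b Hb Hbz) as [[E|Hin] Hw].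
      * subst. contradiction.
      * auto.
Qed.
End L.

Theorem mainTheorem6 (S : StoneRA) :
  atomic S -> atom_rectangular S -> simple_alg S -> finitely_many_atoms S ->
  forall x : S, pc S (pc S x) = x.
Proof.
  intros Hat Hrect Hsimp [l Hl] x.
  pose proof (atom_regular S Hat Hrect Hsimp) as Hreg.
  assert (T : top S ⊑ x ⊔ pc S x).
  { apply (cover S Hat Hreg l). intros b Hb _. split; [auto|].
    destruct (classic (b ⊓ x = bot S)) as [E|E].
    - eapply le_trans; [apply pc_le; exact E| apply sup_ub2].
    - assert (E2 : b ⊓ x = b) by (apply atom_le; auto using inf_lb1).
      eapply le_trans; [|apply sup_ub1]. rewrite <- E2. apply inf_lb2. }
  apply le_antisym; [|apply pp_ge].
  apply le_trans with (pc S (pc S x) ⊓ (x ⊔ pc S x)).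
  - apply inf_glb; [apply le_refl|]. eapply le_trans; [apply le_top| exact T].
  - rewrite inf_sup_distr. rewrite (inf_comm _ _ (pc S x)), pc_inf, sup_bot.
    apply inf_lb2.
Qed.
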